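(* Let $\boldsymbol{W}=\sum_{i=1}^d\lambda_i\boldsymbol{u}_i\boldsymbol{u}_i^\top$ be a positive definite density matrix ($\{\boldsymbol{u}_i\}$ orthonormal, $\lambda_i>0$, $\sum_i\lambda_i=1$) and $\boldsymbol{L}$ a fixed symmetric $d\times d$ matrix. Draw $I,J$ independently with $\Pr(I=i)=\Pr(J=i)=\lambda_i$. If $I=J$ set $\boldsymbol{w}=\boldsymbol{u}_I$; if $I\ne J$ draw a uniform sign $s\in\{-1,1\}$ and set $\boldsymbol{w}=(\boldsymbol{u}_I+s\boldsymbol{u}_J)/\sqrt2$. Let $\ell=\boldsymbol{w}^\top\boldsymbol{L}\boldsymbol{w}$ and \[ \widetilde{\boldsymbol{L}}=\begin{cases}\frac{\ell}{\lambda_I^2}\boldsymbol{u}_I\boldsymbol{u}_I^\top, & I=J,\\ \frac{s\ell}{2\lambda_I\lambda_J}(\boldsymbol{u}_I\boldsymbol{u}_J^\top+\boldsymbol{u}_J\boldsymbol{u}_I^\top), & I\ne J.\end{cases} \] Then $\|\boldsymbol{w}\|=1$, $\mathbb{E}[\boldsymbol{w}\boldsymbol{w}^\top]=\boldsymbol{W}$, and $\mathbb{E}[\widetilde{\boldsymbol{L}}]=\boldsymbol{L}$.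
   Context: A density matrix is a symmetric positive semidefinite matrix of trace $1$. *)

(* Defs.v *)
From HB Require Import structures.
From mathcomp Require Import all_boot all_order all_algebra.
Set Implicit Arguments. Unset Strict Implicit. Unset Printing Implicit Defensive.
Import Order.TTheory GRing.Theory Num.Theory.
Local Open Scope ring_scope.

Section Sampler.
Variables (R : rcfType) (d : nat).
Variables (lam : 'I_d -> R) (u : 'I_d -> 'cV[R]_d) (L : 'M[R]_d).

Definition vnorm (v : 'cV[R]_d) : R := Num.sqrt ((v^T *m v) 0 0).

Definition orthonormal_vecs : Prop :=
  forall i j : 'I_d, (u i)^T *m u j = (i == j)%:R%:M.

(* outcome (I, J, s) with s = 1 if b = true, s = -1 if b = false *)
Definition outcome := ('I_d * 'I_d * bool)%type.

Definition sgn (b : bool) : R := if b then 1 else -1.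

(* Pr(I=i, J=j, s) = lam i * lam j * 1/2 ; the sign is unused when I = J *)
Definition pmf (o : outcome) : R :=
  let: (i, j, _) := o in lam i * lam j / 2.

Definition wvec (o : outcome) : 'cV[R]_d :=
  let: (i, j, b) := o in
  if i == j then u i else (Num.sqrt 2)^-1 *: (u i + sgn b *: u j).

Definition ell (o : outcome) : R := ((wvec o)^T *m L *m wvec o) 0 0.

Definition Ltilde (o : outcome) : 'M[R]_d :=
  let: (i, j, b) := o in
  if i == j then (ell o / lam i ^+ 2) *: (u i *m (u i)^T)
  else (sgn b * ell o / (2 * lam i * lam j)) *: (u i *m (u j)^T + u j *m (u i)^T).

Definition Expect (X : outcome -> 'M[R]_d) : 'M[R]_d :=
  \sum_(o : outcome) pmf o *: X o.

End Sampler.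

(* Main.v *)
Require Import Defs.
From HB Require Import structures.
From mathcomp Require Import all_boot all_order all_algebra.
Import Order.TTheory GRing.Theory Num.Theory.
Local Open Scope ring_scope.
From mathcomp Require Import ring.

Lemma complete (R : rcfType) (d : nat) (u : 'I_d -> 'cV[R]_d) :
  orthonormal_vecs u -> \sum_i u i *m (u i)^T = 1%:M.
Proof.
move=> hu.
pose U : 'M[R]_d := \matrix_(k, i) u i k 0.
have h1 : U^T *m U = 1%:M.
  apply/matrixP=> i j.
  have := congr1 (fun M : 'M[R]_1 => M 0 0) (hu i j).
  rewrite /= !mxE eqxx mulr1n => <-.
  by apply: eq_bigr => k _; rewrite !mxE.
have h2 := mulmx1C h1.
apply/matrixP=> k l; rewrite -h2 summxE !mxE.
by apply: eq_bigr => i _; rewrite !mxE big_ord1 !mxE.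
Qed.

Lemma Expect_split (R : rcfType) d (lam : 'I_d -> R) (X : outcome d -> 'M[R]_d) :
  Expect lam X = \sum_i \sum_j (lam i * lam j / 2) *: (X (i,j,true) + X (i,j,false)).
Proof.
have -> : Expect lam X = \sum_(p : 'I_d * 'I_d) \sum_(b : bool) pmf lam (p,b) *: X (p,b).
  by rewrite /Expect pair_bigA; apply: eq_bigr => [[p b]].
rewrite [RHS]pair_bigA.
by apply: eq_bigr => [[i j]] _; rewrite big_bool /= scalerDr.
Qed.

Definition bil (R : rcfType) d (L : 'M[R]_d) (x y : 'cV[R]_d) : R := (x^T *m L *m y) 0 0.
Arguments bil {R d}.

Lemma bilDl (R : rcfType) d (L : 'M[R]_d) x y z : bil L (x + y) z = bil L x z + bil L y z.
Proof. by rewrite /bil linearD /= !mulmxDl mxE. Qed.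
Lemma bilDr (R : rcfType) d (L : 'M[R]_d) x y z : bil L z (x + y) = bil L z x + bil L z y.
Proof. by rewrite /bil !mulmxDr mxE. Qed.
Lemma bilZl (R : rcfType) d (L : 'M[R]_d) a x z : bil L (a *: x) z = a * bil L x z.
Proof. by rewrite /bil linearZ /= -!scalemxAl mxE. Qed.
Lemma bilZr (R : rcfType) d (L : 'M[R]_d) a x z : bil L z (a *: x) = a * bil L z x.
Proof. by rewrite /bil -!scalemxAr mxE. Qed.
Lemma bilC (R : rcfType) d (L : 'M[R]_d) x z : L^T = L -> bil L x z = bil L z x.
Proof.
move=> hL; rewrite /bil -[in LHS](trmxK (x^T *m L *m z)) mxE.
by rewrite !trmx_mul trmxK hL mulmxA.
Qed.

Lemma hc (R : rcfType) : (Num.sqrt (2:R))^-1 * (Num.sqrt 2)^-1 = 2^-1.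
Proof. by rewrite -invfM -expr2 sqr_sqrtr // ler0n. Qed.

Lemma bil_exp (R : rcfType) d (L : 'M[R]_d) (x y : 'cV[R]_d) c s :
  bil L (c *: (x + s *: y)) (c *: (x + s *: y)) =
  (c * c) * (bil L x x + s * (bil L x y + bil L y x) + s * s * bil L y y).
Proof.
rewrite !(bilZl, bilZr, bilDl, bilDr).
rewrite mulrA; congr (_ * _); ring.
Qed.

Lemma outer_exp (R : rcfType) d (x y : 'cV[R]_d) c s :
  (c *: (x + s *: y)) *m (c *: (x + s *: y))^T =
  (c * c) *: (x *m x^T + s *: (x *m y^T + y *m x^T) + (s * s) *: (y *m y^T)).
Proof.
have tZ : forall (a : R) (v : 'cV[R]_d), (a *: v)^T = a *: v^T.
  by move=> a v; apply/matrixP=> k l; rewrite !mxE.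
rewrite [(c *: _)^T]tZ -scalemxAl -scalemxAr scalerA; congr (_ *: _).
rewrite [(_ + _)^T]linearD /= tZ.
rewrite mulmxDl !mulmxDr -!scalemxAl -!scalemxAr !scalerA !scalerDr !addrA.
by rewrite [_ + s *: (y *m x^T)]addrAC.
Qed.

Lemma lin2 (R : rcfType) (V : lmodType R) (X Y Z : V) :
  (Num.sqrt (2:R))^-1 * (Num.sqrt 2)^-1 *: (X + 1 *: Y + (1 * 1) *: Z) +
  (Num.sqrt (2:R))^-1 * (Num.sqrt 2)^-1 *: (X + (-1) *: Y + ((-1) * (-1)) *: Z) = X + Z.
Proof.
rewrite hc mul1r mulrNN mul1r !scale1r scaleN1r -scalerDr.
rewrite (addrACA (X + Y)) (addrACA X) subrr addr0.
have -> : X + X + (Z + Z) = 2%:R *: (X + Z) by rewrite scalerDr !scaler_nat !mulr2n.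
by rewrite scalerA mulVf ?scale1r // pnatr_eq0.
Qed.

Theorem lemma2 (R : rcfType) (d : nat) (lam : 'I_d -> R) (u : 'I_d -> 'cV[R]_d)
  (W L : 'M[R]_d)
  (hu : orthonormal_vecs u)
  (hlam : forall i, 0 < lam i)
  (hsum : \sum_(i < d) lam i = 1)
  (hW : W = \sum_(i < d) lam i *: (u i *m (u i)^T))
  (hL : L^T = L) :
  (forall o : outcome d, vnorm (wvec u o) = 1) /\
  Expect lam (fun o => wvec u o *m (wvec u o)^T) = W /\
  Expect lam (Ltilde lam u L) = L.
Proof.
have dot : forall k l, ((u k)^T *m u l) 0 0 = (k == l)%:R.
  by move=> k l; rewrite hu mxE eqxx mulr1n.
have bil1 : forall k l, bil 1%:M (u k) (u l) = (k == l)%:R.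
  by move=> k l; rewrite /bil mulmx1 dot.
split.
  move=> [[i j] b]; rewrite /vnorm /=.
  case: eqP => [_|/eqP nij]; first by rewrite dot eqxx sqrtr1.
  set w := _ *: _.
  suff -> : (w^T *m w) 0 0 = 1 by rewrite sqrtr1.
  have -> : (w^T *m w) 0 0 = bil 1%:M w w by rewrite /bil mulmx1.
  rewrite bil_exp !bil1 !eqxx (negbTE nij) eq_sym (negbTE nij) hc.
  by clear w; case: b => /=; field.
split.
  rewrite Expect_split hW.
  have wsum : forall i j, wvec u (i, j, true) *m (wvec u (i, j, true))^T +
      wvec u (i, j, false) *m (wvec u (i, j, false))^T =
      u i *m (u i)^T + u j *m (u j)^T.
    move=> i j; rewrite /wvec /=; case: eqP => [->|_] //.
    by rewrite !outer_exp lin2.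
  under eq_bigr => i _ do under eq_bigr => j _ do rewrite wsum scalerDr.
  under eq_bigr => i _ do rewrite big_split /=.
  rewrite big_split /= [X in _ + X = _]exchange_big /=.
  have e1 : forall k, \sum_j (lam k * lam j / 2) *: (u k *m (u k)^T) = (lam k / 2) *: (u k *m (u k)^T).
    by move=> k; rewrite -scaler_suml -mulr_suml -mulr_sumr hsum mulr1.
  have e2 : forall k, \sum_i (lam i * lam k / 2) *: (u k *m (u k)^T) = (lam k / 2) *: (u k *m (u k)^T).
    by move=> k; rewrite -scaler_suml -mulr_suml -mulr_suml hsum mul1r.
  rewrite (eq_bigr _ (fun k _ => e1 k)) (eq_bigr _ (fun k _ => e2 k)) -big_split.
  by apply: eq_bigr => k _; rewrite [in RHS](splitr (lam k)) scalerDl.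
rewrite Expect_split.
have lsum : forall i j, (lam i * lam j / 2) *: (Ltilde lam u L (i, j, true) + Ltilde lam u L (i, j, false))
   = (bil L (u i) (u j) / 2) *: (u i *m (u j)^T + u j *m (u i)^T).
  move=> i j; have li := hlam i; have lj := hlam j.
  rewrite /Ltilde /ell /wvec /=.
  case: eqP => [<-|/eqP nij].
    rewrite -scalerDl scalerA scalerDr -scalerDl; congr (_ *: _).
    rewrite /bil; field.
    by rewrite gt_eqF.
  rewrite -[((_)^T *m L *m _) 0 0]/(bil L _ _) -[((_)^T *m L *m _) 0 0]/(bil L _ _).
  rewrite !bil_exp hc (@bilC _ _ L (u j) (u i) hL).
  rewrite -scalerDl scalerA; congr (_ *: _).
  field.
  by rewrite !gt_eqF.
under eq_bigr => i _ do under eq_bigr => j _ do rewrite lsum scalerDr.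
under eq_bigr => i _ do rewrite big_split /=.
rewrite big_split /= [X in _ + X = _]exchange_big /=.
under [X in _ + X = _]eq_bigr => j _ do under eq_bigr => i _ do rewrite (@bilC _ _ L (u i) (u j) hL).
rewrite -big_split /=.
under eq_bigr => i _ do rewrite -big_split /=.
under eq_bigr => i _ do under eq_bigr => j _ do rewrite -scalerDl -splitr.
have key : forall i j, bil L (u i) (u j) *: (u i *m (u j)^T) =
    (u i *m (u i)^T) *m L *m (u j *m (u j)^T).
  move=> i j; rewrite !mulmxA -(mulmxA (u i)) -(mulmxA (u i)).
  by rewrite [(u i)^T *m L *m u j]mx11_scalar mul_mx_scalar -scalemxAl.
under eq_bigr => i _ do under eq_bigr => j _ do rewrite key.
under eq_bigr => i _ do rewrite -mulmx_sumr.
by rewrite -mulmx_suml -mulmx_suml complete // mul1mx mulmx1.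
Qed.
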